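(* Let $\underline n=(n_1,\dots,n_d)$ be a tuple of positive integers and suppose the knight graph $\mathcal{G}_{\underline n}$ contains a bi-sited Hamiltonian cycle. Let $k\geq 2$ be an integer and $\underline m=(n_1,\dots,n_d,k)$. Then $\mathcal{G}_{\underline m}$ contains a bi-sited Hamiltonian cycle.
   Context: For a tuple $\underline n=(n_1,\dots,n_d)$ of positive integers, the board is $\mathcal{B}_{\underline n}=\{1,\dots,n_1\}\times\cdots\times\{1,\dots,n_d\}$. Let $\mathcal{C}_d$ be the set of vectors in $\mathbb{Z}^d$ with exactly one coordinate in $\{\pm1\}$, exactly one coordinate in $\{\pm2\}$ and all other coordinates $0$ (knight moves). The knight graph $\mathcal{G}_{\underline n}$ has vertex set $\mathcal{B}_{\underline n}$, with $a,b$ adjacent iff $a-b\in\mathcal{C}_d$. Let $e_1,\dots,e_d$ be the standard basis of $\mathbb{R}^d$. For $c\in\mathcal{C}_d$ let $e_{[c,1]}$ (resp. $e_{[c,2]}$) be the standard basis vector of the coordinate where $c$ has entry $\pm1$ (resp. $\pm2$), and let $\tilde c=-\langle c,e_{[c,1]}\rangle e_{[c,1]}+\langle c,e_{[c,2]}\rangle e_{[c,2]}$ (i.e. $c$ with the sign of its $\pm1$ entry flipped). Let $(a^i)_{i\in I}$, $I=\{1,\dots,N\}$, be a Hamiltonian cycle, indices taken modulo $N$. A quadruple built from two edges $\{a^n,a^{n+1}\}$, $\{a^m,a^{m+1}\}$ of the cycle is a \emph{site} if for some $c\in\mathcal{C}_d$ and some $i$ one of the following holds: (wopp) $a^{n+1}=a^n+c$,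 $a^m=a^{m+1}+c$, and $a^m-a^{n+1}=a^{m+1}-a^n\in\{\pm2e_i\}$; (nwopp) $a^{n+1}=a^n+c$, $a^{m+1}=a^m+c$, and $a^m-a^n=a^{m+1}-a^{n+1}\in\{\pm2e_i\}$; (wocp) $a^{n+1}=a^n+c$, $a^{m+1}=a^m+\tilde c$, and $a^m-a^n=\langle c,e_{[c,1]}\rangle e_{[c,1]}$; (nwocp) $a^{n+1}=a^n+c$, $a^m=a^{m+1}+\tilde c$, and $a^{m+1}-a^n=\langle c,e_{[c,1]}\rangle e_{[c,1]}$. The support of the site is $\{a^n,a^{n+1},a^m,a^{m+1}\}$. A Hamiltonian cycle is \emph{bi-sited} if it contains two sites whose supports are disjoint (the endpoints of the four edges are pairwise distinct). *)

(* Defs.v *)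
(* Points of Z^d are sequences of integers of length d. *)
From mathcomp Require Import all_boot all_order all_algebra.
Set Implicit Arguments. Unset Strict Implicit. Unset Printing Implicit Defensive.
Import Order.TTheory GRing.Theory Num.Theory.
Local Open Scope ring_scope.

Definition vadd (a b : seq int) : seq int := [seq xy.1 + xy.2 | xy <- zip a b].
Definition vsub (a b : seq int) : seq int := [seq xy.1 - xy.2 | xy <- zip a b].
Definition vopp (a : seq int) : seq int := [seq - x | x <- a].

(* x * e_i in Z^d (coordinates indexed 0 .. d-1) *)
Definition unitv (d i : nat) (x : int) : seq int :=
  mkseq (fun j => if j == i then x else 0) d.

Definition in_board (n : seq nat) (a : seq int) : bool :=
  all2 (fun (x : int) (ni : nat) => (1 <= x) && (x <= ni%:Z)) a n.

Definition knight_move (d : nat) (c : seq int) : bool :=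
  [&& size c == d,
      count (fun x => (x == 1) || (x == -1)) c == 1%N,
      count (fun x => (x == 2) || (x == -2)) c == 1%N &
      count (fun x => x != 0) c == 2%N].

Definition idx1 (c : seq int) : nat := find (fun x => (x == 1) || (x == -1)) c.
Definition idx2 (c : seq int) : nat := find (fun x => (x == 2) || (x == -2)) c.

Definition comp1 (c : seq int) : seq int := unitv (size c) (idx1 c) (nth 0 c (idx1 c)).
Definition comp2 (c : seq int) : seq int := unitv (size c) (idx2 c) (nth 0 c (idx2 c)).

Definition ctilde (c : seq int) : seq int := vadd (vopp (comp1 c)) (comp2 c).

Definition knight_adj (d : nat) (a b : seq int) : bool := knight_move d (vsub a b).

Definition ham_cycle (n : seq nat) (p : seq (seq int)) : Prop :=
  [/\ (3 <= size p)%N, uniq p,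
      (forall a, in_board n a <-> a \in p) &
      (forall j, (j < size p)%N ->
         knight_adj (size n) (nth [::] p j) (nth [::] p (j.+1 %% size p)))].

Definition pt (p : seq (seq int)) (j : nat) : seq int := nth [::] p (j %% size p).

Definition pm2e (d : nat) (v : seq int) : Prop :=
  exists i, (i < d)%N /\ (v = unitv d i 2 \/ v = unitv d i (-2)).

Definition site (d : nat) (p : seq (seq int)) (n m : nat) : Prop :=
  exists c, knight_move d c /\
  [\/
      [/\ pt p n.+1 = vadd (pt p n) c, pt p m = vadd (pt p m.+1) c,
          vsub (pt p m) (pt p n.+1) = vsub (pt p m.+1) (pt p n) &
          pm2e d (vsub (pt p m) (pt p n.+1))],
      [/\ pt p n.+1 = vadd (pt p n) c, pt p m.+1 = vadd (pt p m) c,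
          vsub (pt p m) (pt p n) = vsub (pt p m.+1) (pt p n.+1) &
          pm2e d (vsub (pt p m) (pt p n))],
      [/\ pt p n.+1 = vadd (pt p n) c, pt p m.+1 = vadd (pt p m) (ctilde c) &
          vsub (pt p m) (pt p n) = comp1 c] |
      [/\ pt p n.+1 = vadd (pt p n) c, pt p m = vadd (pt p m.+1) (ctilde c) &
          vsub (pt p m.+1) (pt p n) = comp1 c]].

Definition bi_sited (d : nat) (p : seq (seq int)) : Prop :=
  exists n1 m1 n2 m2, [/\ site d p n1 m1, site d p n2 m2 &
    uniq [:: pt p n1; pt p n1.+1; pt p m1; pt p m1.+1;
             pt p n2; pt p n2.+1; pt p m2; pt p m2.+1]].

Definition has_bisited_ham_cycle (n : seq nat) : Prop :=
  exists p, ham_cycle n p /\ bi_sited (size n) p.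

(* Main.v *)
Require Import Defs.
From mathcomp Require Import all_boot all_order all_algebra.
From mathcomp Require Import zify ring lra.
Set Implicit Arguments. Unset Strict Implicit. Unset Printing Implicit Defensive.
Import Order.TTheory GRing.Theory Num.Theory.

Local Open Scope ring_scope.

Lemma size_vsub (a b : seq int) : size (vsub a b) = minn (size a) (size b).
Proof. by rewrite size_map size_zip. Qed.
Lemma size_vadd (a b : seq int) : size (vadd a b) = minn (size a) (size b).
Proof. by rewrite size_map size_zip. Qed.
Lemma size_vopp (a : seq int) : size (vopp a) = size a.
Proof. by rewrite size_map. Qed.
Lemma size_unitv d i x : size (unitv d i x) = d.
Proof. by rewrite size_mkseq. Qed.

Lemma nth_vsub (a b : seq int) j : size a = size b -> nth 0 (vsub a b) j = nth 0 a j - nth 0 b j.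
Proof.
move=> e; case: (ltnP j (size a)) => h.
  by rewrite (nth_map (0,0)) ?size_zip -?e ?minnn // nth_zip.
by rewrite !nth_default ?subr0 // ?size_vsub -?e ?minnn // -e.
Qed.
Lemma nth_vadd (a b : seq int) j : size a = size b -> nth 0 (vadd a b) j = nth 0 a j + nth 0 b j.
Proof.
move=> e; case: (ltnP j (size a)) => h.
  by rewrite (nth_map (0,0)) ?size_zip -?e ?minnn // nth_zip.
by rewrite !nth_default ?addr0 // ?size_vadd -?e ?minnn // -e.
Qed.
Lemma nth_vopp (a : seq int) j : nth 0 (vopp a) j = - nth 0 a j.
Proof.
case: (ltnP j (size a)) => h; first by rewrite (nth_map 0).
by rewrite !nth_default ?oppr0 ?size_vopp.
Qed.
Lemma nth_unitv d i x j : (j < d)%N -> nth 0 (unitv d i x) j = if j == i then x else 0.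
Proof. by move=> h; rewrite nth_mkseq. Qed.

Lemma veq d (a b : seq int) : size a = d -> size b = d ->
  (forall j, (j < d)%N -> nth 0 a j = nth 0 b j) -> a = b.
Proof. move=> ha hb h; apply: (eq_from_nth (x0:=0:int)); first by rewrite ha hb.
by move=> j; rewrite ha; apply: h. Qed.

Lemma count_idx (p : pred int) (s : seq int) (l : seq nat) :
  uniq l -> (forall i, i \in l -> (i < size s)%N && p (nth 0 s i)) ->
  (size l <= count p s)%N.
Proof.
move=> ul hl.
have -> : count p s = count (fun i => p (nth 0 s i)) (iota 0 (size s)).
  by rewrite -{1}(mkseq_nth 0 s) /mkseq count_map.
rewrite -size_filter; apply: uniq_leq_size => // i /hl /andP[h1 h2].
by rewrite mem_filter h2 mem_iota.
Qed.

Definition pm1 (x : int) := (x == 1) || (x == -1).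
Definition pm2 (x : int) := (x == 2) || (x == -2).

Lemma idx1E (c : seq int) : idx1 c = find pm1 c. Proof. by []. Qed.
Lemma idx2E (c : seq int) : idx2 c = find pm2 c. Proof. by []. Qed.

Lemma knightP d (c : seq int) : knight_move d c ->
  [/\ size c = d, (idx1 c < d)%N, (idx2 c < d)%N, pm1 (nth 0 c (idx1 c)) &
      pm2 (nth 0 c (idx2 c))] /\ (idx1 c != idx2 c /\
      forall j, (j < d)%N -> j != idx1 c -> j != idx2 c -> nth 0 c j = 0).
Proof.
case/and4P=> /eqP sc c1 c2 cn.
have h1 : has pm1 c by rewrite has_count (eqP c1).
have h2 : has pm2 c by rewrite has_count (eqP c2).
have l1 : (idx1 c < d)%N by rewrite -sc idx1E -has_find.
have l2 : (idx2 c < d)%N by rewrite -sc idx2E -has_find.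
have p1 : pm1 (nth 0 c (idx1 c)) by apply: nth_find.
have p2 : pm2 (nth 0 c (idx2 c)) by apply: nth_find.
have ne : idx1 c != idx2 c.
  apply/eqP=> e; move: p1 p2; rewrite e /pm1 /pm2.
  by case/orP=> /eqP ->.
split=> //; split=> // j jd n1 n2; apply/eqP/negPn/negP => nz.
have : (size [:: idx1 c; idx2 c; j] <= count (fun x : int => x != 0) c)%N.
  apply: count_idx.
    by rewrite /= !inE negb_or ne eq_sym n1 eq_sym n2.
  move=> i; rewrite !inE sc => /or3P[] /eqP ->; rewrite ?l1 ?l2 ?jd //=.
  - by move: p1; rewrite /pm1; case/orP=> /eqP ->.
  - by move: p2; rewrite /pm2; case/orP=> /eqP ->.
by rewrite (eqP cn).
Qed.

Local Close Scope ring_scope.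

Local Open Scope ring_scope.

Lemma test (a b c : int) : a = b + c -> b = a - c.
Proof. lia. Qed.

Lemma size_comp1 (c : seq int) : size (comp1 c) = size c.
Proof. exact: size_unitv. Qed.
Lemma size_comp2 (c : seq int) : size (comp2 c) = size c.
Proof. exact: size_unitv. Qed.
Lemma size_ctilde (c : seq int) : size (ctilde c) = size c.
Proof. by rewrite size_vadd size_vopp size_comp1 size_comp2 minnn. Qed.

Lemma nth_comp1 (c : seq int) j : (j < size c)%N ->
  nth 0 (comp1 c) j = if j == idx1 c then nth 0 c (idx1 c) else 0.
Proof. exact: nth_unitv. Qed.
Lemma nth_comp2 (c : seq int) j : (j < size c)%N ->
  nth 0 (comp2 c) j = if j == idx2 c then nth 0 c (idx2 c) else 0.
Proof. exact: nth_unitv. Qed.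
Lemma nth_ctilde (c : seq int) j :
  nth 0 (ctilde c) j = - nth 0 (comp1 c) j + nth 0 (comp2 c) j.
Proof. by rewrite nth_vadd ?nth_vopp // size_vopp size_comp1 size_comp2. Qed.

Lemma knight_decomp d (c : seq int) j : knight_move d c -> (j < d)%N ->
  nth 0 c j = nth 0 (comp1 c) j + nth 0 (comp2 c) j.
Proof.
move=> kc jd; have [[sc _ _ _ _] [ne z]] := knightP kc.
rewrite nth_comp1 ?nth_comp2 ?sc //.
case: eqP => [->|/eqP n1]; first by rewrite (negbTE ne) addr0.
case: eqP => [->|/eqP n2]; first by rewrite add0r.
by rewrite addr0 z.
Qed.

Lemma pm1N x : pm1 (- x) = pm1 x.
Proof. by rewrite /pm1 !eqr_oppLR opprK orbC. Qed.
Lemma pm2N x : pm2 (- x) = pm2 x.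
Proof. by rewrite /pm2 !eqr_oppLR opprK orbC. Qed.

Lemma idx1_vopp (c : seq int) : idx1 (vopp c) = idx1 c.
Proof. by rewrite !idx1E find_map; apply: eq_find => x /=; rewrite pm1N. Qed.
Lemma idx2_vopp (c : seq int) : idx2 (vopp c) = idx2 c.
Proof. by rewrite !idx2E find_map; apply: eq_find => x /=; rewrite pm2N. Qed.

Lemma knight_vopp d (c : seq int) : knight_move d c -> knight_move d (vopp c).
Proof.
rewrite /knight_move; case/and4P=> s1 s2 s3 s4; apply/and4P; split.
- by rewrite size_vopp.
- by rewrite count_map (@eq_count _ _ (fun x : int => (x == 1) || (x == -1))) // => x /=; apply: pm1N.
- by rewrite count_map (@eq_count _ _ (fun x : int => (x == 2) || (x == -2))) // => x /=; apply: pm2N.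
- by rewrite count_map (@eq_count _ _ (fun x : int => x != 0)) // => x /=; rewrite oppr_eq0.
Qed.

Lemma comp1_vopp (c : seq int) : comp1 (vopp c) = vopp (comp1 c).
Proof.
apply: (@veq (size c)); rewrite ?size_vopp ?size_comp1 ?size_vopp // => j jd.
by rewrite nth_vopp !nth_comp1 ?size_vopp // idx1_vopp nth_vopp; case: eqP; rewrite ?oppr0.
Qed.
Lemma comp2_vopp (c : seq int) : comp2 (vopp c) = vopp (comp2 c).
Proof.
apply: (@veq (size c)); rewrite ?size_vopp ?size_comp2 ?size_vopp // => j jd.
by rewrite nth_vopp !nth_comp2 ?size_vopp // idx2_vopp nth_vopp; case: eqP; rewrite ?oppr0.
Qed.

Lemma pw_add (y a b : seq int) : size a = size b -> y = vadd a b ->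
  forall j, nth 0 y j = nth 0 a j + nth 0 b j.
Proof. by move=> e -> j; rewrite nth_vadd. Qed.
Lemma pw_sub (y a b : seq int) : size a = size b -> vsub a b = y ->
  forall j, nth 0 y j = nth 0 a j - nth 0 b j.
Proof. by move=> e <- j; rewrite nth_vsub. Qed.
Lemma gl_add d (y a b : seq int) : size y = d -> size a = d -> size b = d ->
  (forall j, (j < d)%N -> nth 0 y j = nth 0 a j + nth 0 b j) -> y = vadd a b.
Proof.
move=> sy sa sb h; apply: (veq sy); first by rewrite size_vadd sa sb minnn.
by move=> j jd; rewrite nth_vadd ?sa ?sb // h.
Qed.
Lemma gl_sub d (y a b : seq int) : size y = d -> size a = d -> size b = d ->
  (forall j, (j < d)%N -> nth 0 y j = nth 0 a j - nth 0 b j) -> vsub a b = y.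
Proof.
move=> sy sa sb h; symmetry; apply: (veq sy); first by rewrite size_vsub sa sb minnn.
by move=> j jd; rewrite nth_vsub ?sa ?sb // h.
Qed.

Definition sitepts d (x y u v : seq int) : Prop :=
  exists c, knight_move d c /\
  [\/ [/\ y = vadd x c, u = vadd v c, vsub u y = vsub v x & pm2e d (vsub u y)],
      [/\ y = vadd x c, v = vadd u c, vsub u x = vsub v y & pm2e d (vsub u x)],
      [/\ y = vadd x c, v = vadd u (ctilde c) & vsub u x = comp1 c] |
      [/\ y = vadd x c, u = vadd v (ctilde c) & vsub v x = comp1 c]].

Lemma siteE d p n m : site d p n m = sitepts d (pt p n) (pt p n.+1) (pt p m) (pt p m.+1).
Proof. by []. Qed.

Lemma site_swap2 d x y u v : sitepts d x y u v -> sitepts d x y v u.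
Proof.
move=> [c [kc H]]; exists c; split=> //.
case: H => [[e1 e2 e3 e4]|[e1 e2 e3 e4]|[e1 e2 e3]|[e1 e2 e3]].
- by apply: Or42; split=> //; rewrite -e3.
- by apply: Or41; split=> //; rewrite -e3.
- by apply: Or44.
- by apply: Or43.
Qed.

Lemma site_swap1 d x y u v : size x = d -> size y = d -> size u = d -> size v = d ->
  sitepts d x y u v -> sitepts d y x u v.
Proof.
move=> sx sy su sv [c [kc H]]; have [[sc _ _ _ _] _] := knightP kc.
have sc' : size (vopp c) = d by rewrite size_vopp.
have dec := knight_decomp kc.
have ct := nth_ctilde c.
exists (vopp c); split; first exact: knight_vopp.
case: H => [[e1 e2 e3 e4]|[e1 e2 e3 e4]|[e1 e2 e3]|[e1 e2 e3]].
- apply: Or42; split=> //.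
  + apply: (gl_add sx sy sc') => j _; rewrite nth_vopp (pw_add _ e1) ?sx //; lia.
  + apply: (gl_add sv su sc') => j _; rewrite nth_vopp (pw_add _ e2) ?sv //; lia.
- apply: Or41; split=> //.
  + apply: (gl_add sx sy sc') => j _; rewrite nth_vopp (pw_add _ e1) ?sx //; lia.
  + apply: (gl_add su sv sc') => j _; rewrite nth_vopp (pw_add _ e2) ?su //; lia.
- apply: Or44; split.
  + apply: (gl_add sx sy sc') => j _; rewrite nth_vopp (pw_add _ e1) ?sx //; lia.
  + apply: (gl_add su sv); rewrite ?size_ctilde // => j jd.
    rewrite (pw_add _ e2) ?su ?size_ctilde // !nth_ctilde comp1_vopp comp2_vopp !nth_vopp.
    lia.
  + apply: (gl_sub (d:=d)); rewrite ?size_comp1 // => j jd.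
    rewrite comp1_vopp nth_vopp (pw_add _ e2) ?su ?size_ctilde // (pw_add _ e1) ?sx //.
    have := pw_sub _ e3 j; rewrite su sx => /(_ erefl).
    have := dec j jd; rewrite ct; lia.
- apply: Or43; split.
  + apply: (gl_add sx sy sc') => j _; rewrite nth_vopp (pw_add _ e1) ?sx //; lia.
  + apply: (gl_add sv su); rewrite ?size_ctilde // => j jd.
    rewrite (pw_add _ e2) ?sv ?size_ctilde // !nth_ctilde comp1_vopp comp2_vopp !nth_vopp.
    lia.
  + apply: (gl_sub (d:=d)); rewrite ?size_comp1 // => j jd.
    rewrite comp1_vopp nth_vopp (pw_add _ e2) ?sv ?size_ctilde // (pw_add _ e1) ?sx //.
    have := pw_sub _ e3 j; rewrite sv sx => /(_ erefl).
    have := dec j jd; rewrite ct; lia.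
Qed.

Local Close Scope ring_scope.

Local Open Scope ring_scope.

Lemma vopp_unitv d i (x : int) : vopp (unitv d i x) = unitv d i (- x).
Proof.
apply: (@veq d); rewrite ?size_vopp ?size_unitv // => j jd.
by rewrite nth_vopp !nth_unitv //; case: eqP; rewrite ?oppr0.
Qed.

Lemma vsub_swap (a b : seq int) : vsub b a = vopp (vsub a b).
Proof. rewrite /vsub /vopp; elim: a b => [|x a IH] [|y b] //=; by rewrite IH opprB. Qed.


Lemma pm2e_opp d w : pm2e d w -> pm2e d (vopp w).
Proof.
case=> i [id [->|->]]; exists i; split=> //; rewrite vopp_unitv ?opprK; by [right|left].
Qed.

Lemma pm2e_sym d (a b : seq int) : pm2e d (vsub a b) -> pm2e d (vsub b a).
Proof. by move=> h; rewrite vsub_swap; apply: pm2e_opp. Qed.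

Lemma pm2e_comp2 d (c : seq int) : knight_move d c -> pm2e d (comp2 c).
Proof.
move=> kc; have [[sc _ l2 _ p2] _] := knightP kc.
exists (idx2 c); split=> //; rewrite /comp2 sc.
by move: p2; rewrite /pm2; case/orP=> /eqP ->; [left|right].
Qed.

Lemma site_cross d x y u v : size x = d -> size y = d -> size u = d -> size v = d ->
  sitepts d x y u v ->
  (pm2e d (vsub v x) /\ pm2e d (vsub u y)) \/ (pm2e d (vsub u x) /\ pm2e d (vsub v y)).
Proof.
move=> sx sy su sv [c [kc H]]; have [[sc _ _ _ _] _] := knightP kc.
have dec := knight_decomp kc.
have ct := nth_ctilde c.
have P := pm2e_comp2 kc.
case: H => [[e1 e2 e3 e4]|[e1 e2 e3 e4]|[e1 e2 e3]|[e1 e2 e3]].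
- by left; rewrite -e3.
- by right; rewrite -e3.
- left; split.
  + suff -> : vsub v x = comp2 c by [].
    apply: (gl_sub (d:=d)); rewrite ?size_comp2 // => j jd.
    rewrite (pw_add _ e2) ?su ?size_ctilde // ct.
    have := pw_sub _ e3 j; rewrite su sx => /(_ erefl); lia.
  + suff -> : vsub u y = vopp (comp2 c) by apply: pm2e_opp.
    apply: (gl_sub (d:=d)); rewrite ?size_vopp ?size_comp2 // => j jd.
    rewrite nth_vopp (pw_add _ e1) ?sx //.
    have := pw_sub _ e3 j; rewrite su sx => /(_ erefl).
    have := dec j jd; lia.
- right; split.
  + suff -> : vsub u x = comp2 c by [].
    apply: (gl_sub (d:=d)); rewrite ?size_comp2 // => j jd.
    rewrite (pw_add _ e2) ?sv ?size_ctilde // ct.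
    have := pw_sub _ e3 j; rewrite sv sx => /(_ erefl); lia.
  + suff -> : vsub v y = vopp (comp2 c) by apply: pm2e_opp.
    apply: (gl_sub (d:=d)); rewrite ?size_vopp ?size_comp2 // => j jd.
    rewrite nth_vopp (pw_add _ e1) ?sx //.
    have := pw_sub _ e3 j; rewrite sv sx => /(_ erefl).
    have := dec j jd; lia.
Qed.

Lemma vadd_rcons (a b : seq int) s s' : size a = size b ->
  vadd (rcons a s) (rcons b s') = rcons (vadd a b) (s + s').
Proof. by move=> e; rewrite /vadd zip_rcons // map_rcons. Qed.
Lemma vsub_rcons (a b : seq int) s s' : size a = size b ->
  vsub (rcons a s) (rcons b s') = rcons (vsub a b) (s - s').
Proof. by move=> e; rewrite /vsub zip_rcons // map_rcons. Qed.
Lemma vopp_rcons (a : seq int) s : vopp (rcons a s) = rcons (vopp a) (- s).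
Proof. by rewrite /vopp map_rcons. Qed.
Lemma unitv_rcons d i (x : int) : (i < d)%N -> unitv d.+1 i x = rcons (unitv d i x) 0.
Proof. by move=> h; rewrite /unitv mkseqS; case: eqP => // e; rewrite e ltnn in h. Qed.

Lemma count_rcons' (p : pred int) s x : count p (rcons s x) = (count p s + p x)%N.
Proof. by rewrite -cats1 count_cat /= addn0. Qed.

Lemma knight_rcons0 d (c : seq int) : knight_move d.+1 (rcons c 0) = knight_move d c.
Proof. by rewrite /knight_move size_rcons eqSS !count_rcons' /= !addn0. Qed.

Lemma idx1_rcons (c : seq int) x : has pm1 c -> idx1 (rcons c x) = idx1 c.
Proof. by move=> h; rewrite !idx1E -cats1 find_cat h. Qed.
Lemma idx2_rcons (c : seq int) x : has pm2 c -> idx2 (rcons c x) = idx2 c.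
Proof. by move=> h; rewrite !idx2E -cats1 find_cat h. Qed.

Lemma comp1_rcons d (c : seq int) : knight_move d c -> comp1 (rcons c 0) = rcons (comp1 c) 0.
Proof.
move=> kc; have [[sc l1 _ p1 _] _] := knightP kc.
have h : has pm1 c by apply/hasP; exists (nth 0 c (idx1 c)) => //; rewrite mem_nth ?sc.
by rewrite /comp1 size_rcons idx1_rcons // nth_rcons_default unitv_rcons ?sc.
Qed.
Lemma comp2_rcons d (c : seq int) : knight_move d c -> comp2 (rcons c 0) = rcons (comp2 c) 0.
Proof.
move=> kc; have [[sc _ l2 _ p2] _] := knightP kc.
have h : has pm2 c by apply/hasP; exists (nth 0 c (idx2 c)) => //; rewrite mem_nth ?sc.
by rewrite /comp2 size_rcons idx2_rcons // nth_rcons_default unitv_rcons ?sc.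
Qed.
Lemma ctilde_rcons d (c : seq int) : knight_move d c -> ctilde (rcons c 0) = rcons (ctilde c) 0.
Proof.
move=> kc; rewrite /ctilde (comp1_rcons kc) (comp2_rcons kc) vopp_rcons vadd_rcons.
  by rewrite oppr0 addr0.
by rewrite size_vopp size_comp1 size_comp2.
Qed.

Lemma pm2e_rcons d w : pm2e d w -> pm2e d.+1 (rcons w 0).
Proof.
case=> i [id [->|->]]; exists i; split; rewrite ?unitv_rcons //; try by [left|right].
exact: ltnW.
exact: ltnW.
Qed.

Lemma site_lift d x y u v (t : int) : size x = d -> size y = d -> size u = d -> size v = d ->
  sitepts d x y u v ->
  sitepts d.+1 (rcons x t) (rcons y t) (rcons u t) (rcons v t).
Proof.
move=> sx sy su sv [c [kc H]]; have [[sc _ _ _ _] _] := knightP kc.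
exists (rcons c 0); split; first by rewrite knight_rcons0.
have A : forall a b : seq int, size a = d -> size b = d -> a = vadd b c ->
    rcons a t = vadd (rcons b t) (rcons c 0).
  by move=> a b sa sb ->; rewrite vadd_rcons ?sb // addr0.
have B : forall a b : seq int, size a = d -> size b = d -> a = vadd b (ctilde c) ->
    rcons a t = vadd (rcons b t) (ctilde (rcons c 0)).
  by move=> a b sa sb ->; rewrite (ctilde_rcons kc) vadd_rcons ?sb ?size_ctilde // addr0.
have S : forall a b : seq int, size a = d -> size b = d ->
    vsub (rcons a t) (rcons b t) = rcons (vsub a b) 0.
  by move=> a b sa sb; rewrite vsub_rcons ?sa ?sb // subrr.
case: H => [[e1 e2 e3 e4]|[e1 e2 e3 e4]|[e1 e2 e3]|[e1 e2 e3]].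
- apply: Or41; split; rewrite ?S //; try by [apply: A]; first by rewrite e3.
  exact: pm2e_rcons.
- apply: Or42; split; rewrite ?S //; try by [apply: A]; first by rewrite e3.
  exact: pm2e_rcons.
- apply: Or43; split; rewrite ?S //; try by [apply: A|apply: B].
  by rewrite e3 (comp1_rcons kc).
- apply: Or44; split; rewrite ?S //; try by [apply: A|apply: B].
  by rewrite e3 (comp1_rcons kc).
Qed.

Lemma count_unitv (p : pred int) d i x : ~~ p 0 -> (i < d)%N ->
  count p (unitv d i x) = p x.
Proof.
move=> p0 id; rewrite /unitv /mkseq count_map.
rewrite (@eq_count _ _ (fun j => (j == i) && p x)); last first.
  by move=> j /=; case: eqP => _ //=; rewrite (negbTE p0).
case: (p x).
  rewrite (@eq_count _ _ (pred1 i)); last by move=> j /=; rewrite andbT.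
  by rewrite count_uniq_mem ?iota_uniq // mem_iota id.
by rewrite (@eq_count _ _ pred0) ?count_pred0 // => j /=; rewrite andbF.
Qed.

Lemma knight_adj_sym d a b : knight_adj d a b -> knight_adj d b a.
Proof. by move=> h; rewrite /knight_adj vsub_swap; apply: knight_vopp. Qed.

Lemma knight_adj_lift d (a b : seq int) t : size a = size b ->
  knight_adj d a b -> knight_adj d.+1 (rcons a t) (rcons b t).
Proof. by move=> e; rewrite /knight_adj vsub_rcons // subrr knight_rcons0. Qed.

Lemma knight_adj_cross d (a b : seq int) s s' : size a = d -> size b = d ->
  pm2e d (vsub a b) -> pm1 (s - s') -> knight_adj d.+1 (rcons a s) (rcons b s').
Proof.
move=> sa sb [i [id E]] ps; rewrite /knight_adj vsub_rcons ?sa ?sb //.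
have [E1|E1] : s - s' = 1 \/ s - s' = -1 by move: ps; rewrite /pm1; case/orP=> /eqP; auto.
all: rewrite /knight_move size_rcons !count_rcons' size_vsub sa sb minnn eqxx /= E1.
all: by case: E => ->; rewrite !count_unitv.
Qed.

Local Close Scope ring_scope.

Section Lists.
Variable e : rel (seq int).
Notation T := (seq (seq int)).

Definition cyc (s : T) := forall j, j < size s -> e (pt s j) (pt s j.+1).
Definition ipath (s : T) := forall q, q.+1 < size s -> e (nth [::] s q) (nth [::] s q.+1).
Definition iedge (s : T) a b := exists q, [/\ q.+1 < size s, nth [::] s q = a & nth [::] s q.+1 = b].
Definition cedge (s : T) a b := exists j, pt s j = a /\ pt s j.+1 = b.
Definition present (s : T) a b := cedge s a b \/ cedge s b a.

Lemma pt_eq (s : T) j k : j %% size s = k %% size s -> pt s j = pt s k.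
Proof. by rewrite /pt => ->. Qed.

Lemma pt_eqS (s : T) j k : j %% size s = k %% size s -> pt s j.+1 = pt s k.+1.
Proof.
move=> h; apply: pt_eq; rewrite -[j.+1]addn1 -[k.+1]addn1.
by rewrite -modnDml h modnDml.
Qed.

Lemma cyc_all (s : T) : cyc s -> 0 < size s -> forall j, e (pt s j) (pt s j.+1).
Proof.
move=> c s0 j; have := c (j %% size s) (ltn_pmod _ s0).
by rewrite (@pt_eq s (j %% size s) j) ?modn_mod // (@pt_eqS s (j %% size s) j) ?modn_mod.
Qed.

Lemma nth_rot' (s : T) r q : r <= size s -> q < size s -> nth [::] (rot r s) q = pt s (r + q).
Proof.
move=> rs qs; rewrite /rot nth_cat size_drop.
case: ifP => h.
  by rewrite nth_drop /pt modn_small //; lia.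
rewrite nth_take; last by lia.
rewrite /pt; congr nth.
have -> : r + q = (q - (size s - r)) + size s by lia.
by rewrite modnDr modn_small //; lia.
Qed.

Lemma iedge_cedge (s : T) a b : iedge s a b -> cedge s a b.
Proof.
case=> q [qs ha hb]; exists q; rewrite /pt !modn_small //; lia.
Qed.

Lemma iedge_catl (P Q : T) a b : iedge P a b -> iedge (P ++ Q) a b.
Proof.
case=> q [qs ha hb]; exists q; rewrite size_cat !nth_cat qs (ltnW qs); split=> //; lia.
Qed.

Lemma iedge_catr (P Q : T) a b : iedge Q a b -> iedge (P ++ Q) a b.
Proof.
case=> q [qs ha hb]; exists (size P + q); rewrite size_cat !nth_cat.
have -> : (size P + q < size P) = false by lia.
have -> : ((size P + q).+1 < size P) = false by lia.
rewrite -addnS !addKn; split=> //; lia.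
Qed.

Lemma iedge_rev (s : T) a b : iedge s a b -> iedge (rev s) b a.
Proof.
case=> q [qs ha hb]; exists (size s - q.+2); rewrite size_rev !nth_rev; try lia.
have -> : size s - (size s - q.+2).+1 = q.+1 by lia.
have -> : size s - (size s - q.+2).+2 = q by lia.
split=> //; lia.
Qed.

Hypothesis esym : symmetric e.

Lemma ipath_rev (s : T) : ipath s -> ipath (rev s).
Proof.
move=> p q; rewrite size_rev => qs; rewrite !nth_rev; try lia.
have -> : size s - q.+1 = (size s - q.+2).+1 by lia.
by rewrite esym; apply: p; lia.
Qed.

Lemma cyc_cat (P Q : T) : ipath P -> ipath Q -> 0 < size P -> 0 < size Q ->
  e (nth [::] P (size P).-1) (nth [::] Q 0) -> e (nth [::] Q (size Q).-1) (nth [::] P 0) ->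
  cyc (P ++ Q).
Proof.
move=> pP pQ sP sQ e1 e2 j; rewrite size_cat => js.
rewrite /pt size_cat (modn_small js).
case: (ltnP j.+1 (size P + size Q)) => h.
  rewrite modn_small // !nth_cat.
  case: (ltnP j.+1 (size P)) => h1.
    by rewrite (ltnW h1); apply: pP.
  case: (ltnP j (size P)) => h2.
    have ej : j = (size P).-1 by lia.
    have -> : j.+1 - size P = 0 by lia.
    by rewrite ej.
  rewrite subSn //; apply: pQ; lia.
have -> : j.+1 = size P + size Q by lia.
rewrite modnn !nth_cat sP.
have -> : j < size P = false by lia.
have -> : j - size P = (size Q).-1 by lia.
exact: e2.
Qed.

Variable C : T.
Hypothesis cycC : cyc C.
Hypothesis sC : 0 < size C.

Lemma rot_remove i :
  let P := rot (i.+1 %% size C) C in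
  [/\ ipath P, size P = size C, nth [::] P 0 = pt C i.+1, nth [::] P (size P).-1 = pt C i &
      forall a b, cedge C a b -> a <> pt C i -> iedge P a b].
Proof.
move=> P.
have rs : i.+1 %% size C <= size C by apply: ltnW; apply: ltn_pmod.
have nP : forall q, q < size C -> nth [::] P q = pt C (i.+1 + q).
  move=> q qs; rewrite /P nth_rot' //; apply: pt_eq; by rewrite modnDml.
have sP : size P = size C by rewrite size_rot.
split=> //.
- move=> q; rewrite sP => qs; rewrite !nth_rot' ?rs //; try lia.
  rewrite addnS; exact: cyc_all.
- by rewrite nP // addn0.
- rewrite sP nP; last by lia.
  apply: pt_eq; have -> : i.+1 + (size C).-1 = i + size C by lia.
  by rewrite modnDr.
- move=> a b [p [ha hb]] na.
  set r := i.+1 %% size C.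
  set q := (p + (size C - r)) %% size C.
  have qs : q < size C by apply: ltn_pmod.
  have cq : (r + q) %% size C = p %% size C.
    rewrite /q modnDmr.
    have -> : r + (p + (size C - r)) = p + size C by lia.
    by rewrite modnDr.
  have nq : nth [::] P q = a by rewrite /P nth_rot' // -ha; apply: pt_eq.
  have q1 : q.+1 < size C.
    case: (ltnP q.+1 (size C)) => // h.
    have eq : q = (size C).-1 by lia.
    exfalso; apply: na; rewrite -nq /P nth_rot' //.
    apply: pt_eq; rewrite eq /r modnDml.
    have -> : i.+1 + (size C).-1 = i + size C by lia.
    by rewrite modnDr.
  exists q; split; rewrite ?sP //.
  rewrite /P nth_rot' // -hb addnS; exact: pt_eqS.
Qed.

End Lists.

Section Merge.
Variable e : rel (seq int).
Hypothesis esym : symmetric e.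
Notation T := (seq (seq int)).

Lemma present_sym (s : T) a b : present s a b -> present s b a.
Proof. by case; [right|left]. Qed.

Lemma merge_cyc (C L : T) i j :
  cyc e C -> cyc e L -> 0 < size C -> 0 < size L ->
  (e (pt C i) (pt L j.+1) /\ e (pt L j) (pt C i.+1)) \/
  (e (pt C i) (pt L j) /\ e (pt L j.+1) (pt C i.+1)) ->
  exists M : T, [/\ cyc e M, perm_eq M (C ++ L),
    (forall a b, present C a b -> a <> pt C i -> b <> pt C i -> present M a b) &
    (forall a b, present L a b -> a <> pt L j -> b <> pt L j -> present M a b)].
Proof.
move=> cC cL sC sL X.
have [pP szP hP lP eP] := rot_remove cC sC i.
have [pQ szQ hQ lQ eQ] := rot_remove cL sL j.
set P := rot _ C in pP szP hP lP eP.
set Q := rot _ L in pQ szQ hQ lQ eQ.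
have permP : perm_eq P C by rewrite /P perm_rot.
have permQ : perm_eq Q L by rewrite /Q perm_rot.
have PC : forall a b, present C a b -> a <> pt C i -> b <> pt C i -> present (P ++ Q) a b /\ present (P ++ rev Q) a b.
  move=> a b [h|h] na nb.
  - by split; left; apply: iedge_cedge; apply: iedge_catl; apply: eP.
  - by split; right; apply: iedge_cedge; apply: iedge_catl; apply: eP.
have QL : forall a b, present L a b -> a <> pt L j -> b <> pt L j -> present (P ++ Q) a b /\ present (P ++ rev Q) a b.
  move=> a b [h|h] na nb.
  - split; first by left; apply: iedge_cedge; apply: iedge_catr; apply: eQ.
    by right; apply: iedge_cedge; apply: iedge_catr; apply: iedge_rev; apply: eQ.
  - split; first by right; apply: iedge_cedge; apply: iedge_catr; apply: eQ.
    by left; apply: iedge_cedge; apply: iedge_catr; apply: iedge_rev; apply: eQ.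
case: X => [[e1 e2]|[e1 e2]].
- exists (P ++ Q); split.
  + apply: cyc_cat => //; try by rewrite ?szP ?szQ.
    * by rewrite lP hQ.
    * by rewrite lQ hP.
  + exact: perm_cat.
  + by move=> a b h na nb; case: (PC a b h na nb).
  + by move=> a b h na nb; case: (QL a b h na nb).
- exists (P ++ rev Q); split.
  + apply: cyc_cat => //; try by rewrite ?size_rev ?szP ?szQ.
    * exact: ipath_rev.
    * rewrite lP nth_rev; last by rewrite szQ.
      by rewrite subn1 lQ.
    * rewrite hP size_rev nth_rev; last by rewrite szQ; lia.
      have -> : size Q - (size Q).-1.+1 = 0 by rewrite szQ; lia.
      by rewrite hQ.
  + by apply: perm_cat => //; rewrite perm_rev.
  + by move=> a b h na nb; case: (PC a b h na nb).
  + by move=> a b h na nb; case: (QL a b h na nb).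
Qed.
End Merge.

Definition lay (H : seq (seq int)) (t : nat) := map (fun a => rcons a (Posz t)) H.

Lemma size_lay H t : size (lay H t) = size H.
Proof. by rewrite size_map. Qed.

Lemma pt_lay H t j : 0 < size H -> pt (lay H t) j = rcons (pt H j) (Posz t).
Proof. by move=> h; rewrite /pt size_lay (nth_map [::]) // ltn_pmod. Qed.

Lemma cedge_lay H t a b : 0 < size H -> cedge H a b -> cedge (lay H t) (rcons a (Posz t)) (rcons b (Posz t)).
Proof. by move=> h [j [ha hb]]; exists j; rewrite !pt_lay // ha hb. Qed.

Lemma rcons_neq (a b : seq int) s s' : a != b -> rcons a s <> rcons b s'.
Proof. by move=> /eqP nab /rcons_inj [] ab _; apply: nab. Qed.

Lemma knight_sym d : symmetric (knight_adj d).
Proof. by move=> a b; apply/idP/idP; apply: knight_adj_sym. Qed.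

Lemma pm1_lay (t : nat) : pm1 (Posz t - Posz t.+1) /\ pm1 (Posz t.+1 - Posz t).
Proof. rewrite /pm1; split; apply/orP; [right|left]; apply/eqP; lia. Qed.

Lemma ar1 s t : (0 < s <= t -> 0 < s <= t.+1)%N.
Proof. lia. Qed.
Lemma ar2 s t : (0 < s <= t.+1 -> s < t.+1 -> 0 < s <= t)%N.
Proof. lia. Qed.
Lemma ar3 s t : (0 < s <= t.+1 -> t.+1 <= s -> s = t.+1)%N.
Proof. lia. Qed.
Lemma ar4 t : (0 < t -> t <= 1 -> t = 1)%N.
Proof. lia. Qed.
Lemma ar5 s : (0 < s <= 1 -> s = 1)%N.
Proof. lia. Qed.

Section Build.
Variable d : nat.
Variable H : seq (seq int).
Hypothesis cycH : cyc (knight_adj d) H.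
Hypothesis sH : (0 < size H)%N.
Hypothesis uH : uniq H.
Hypothesis szH : forall a, a \in H -> size a = d.
Variables A B Cc D x2 y2 u2 v2 : seq int.
Hypothesis eAB : cedge H A B.
Hypothesis eCD : cedge H Cc D.
Hypothesis exy : cedge H x2 y2.
Hypothesis euv : cedge H u2 v2.
Hypothesis cross : (pm2e d (vsub D A) /\ pm2e d (vsub Cc B)) \/
                   (pm2e d (vsub Cc A) /\ pm2e d (vsub D B)).
Hypothesis dist : uniq [:: A; B; Cc; D; x2; y2; u2; v2].

Let e := knight_adj d.+1.
Let esym : symmetric e := @knight_sym d.+1.

Lemma ptH j : pt H j \in H.
Proof. by rewrite /pt mem_nth // ltn_pmod. Qed.

Lemma cedge_mem a b : cedge H a b -> a \in H /\ b \in H.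
Proof. by case=> j [<- <-]; rewrite !ptH. Qed.

Let L8 := [:: A; B; Cc; D; x2; y2; u2; v2].
Lemma ne i j : (i < 8)%N -> (j < 8)%N -> i != j -> nth [::] L8 i != nth [::] L8 j.
Proof. by move=> hi hj hij; rewrite nth_uniq. Qed.

Lemma cyc_lay t : cyc e (lay H t).
Proof.
move=> j _; rewrite !pt_lay //; apply: knight_adj_lift.
  by rewrite !szH ?ptH.
exact: (cyc_all cycH sH).
Qed.

Definition Inv (t : nat) (Cy : seq (seq int)) :=
  [/\ cyc e Cy, uniq Cy, size Cy = (t * size H)%N,
      (forall z, z \in Cy <-> exists a (s : nat), [/\ a \in H, (0 < s <= t)%N & z = rcons a (Posz s)]) &
      [/\ present Cy (rcons A (Posz t)) (rcons B (Posz t)),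
          present Cy (rcons x2 (Posz 1)) (rcons y2 (Posz 1)),
          present Cy (rcons u2 (Posz 1)) (rcons v2 (Posz 1)) &
          (1 < t)%N -> present Cy (rcons x2 (Posz 2)) (rcons y2 (Posz 2)) /\
                       present Cy (rcons u2 (Posz 2)) (rcons v2 (Posz 2))]].

Lemma inv_base : Inv 1 (lay H 1).
Proof.
split.
- exact: cyc_lay.
- by rewrite map_inj_uniq // => a b; apply: rcons_injl.
- by rewrite size_lay mul1n.
- move=> z; split.
    by case/mapP=> a ha ->; exists a, 1%N.
  case=> a [s [ha hs ->]]; rewrite (ar5 hs).
  exact: map_f.
- split => //; try by left; apply: cedge_lay.
Qed.

Lemma inv_step t Cy : (0 < t)%N -> Inv t Cy -> exists Cy', Inv t.+1 Cy'.
Proof.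
move=> t0 [cC uC sC mC [pAB pxy puv p2]].
set L := lay H t.+1.
have [j0 [hC hD]] := eCD.
have [mC0 mD0] := cedge_mem eCD.
have [mA0 mB0] := cedge_mem eAB.
have sCy : (0 < size Cy)%N by rewrite sC muln_gt0 t0.
have adj : forall a b : seq int, a \in H -> b \in H -> pm2e d (vsub a b) ->
    e (rcons a (Posz t)) (rcons b (Posz t.+1)) /\ e (rcons b (Posz t.+1)) (rcons a (Posz t)).
  move=> a b ha hb p; split; apply: knight_adj_cross; rewrite ?szH //.
  - exact: (pm1_lay t).1.
  - exact: pm2e_sym.
  - exact: (pm1_lay t).2.
have ptL : forall j, pt L j = rcons (pt H j) (Posz t.+1) by move=> j; rewrite pt_lay.
have [i [X [Y [hX hY XY]]]] : exists i X Y, [/\ pt Cy i = rcons X (Posz t), pt Cy i.+1 = rcons Y (Posz t) &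
     (X = A /\ Y = B) \/ (X = B /\ Y = A)].
  case: pAB => [[i [h1 h2]]|[i [h1 h2]]]; exists i.
  - by exists A, B; split=> //; left.
  - by exists B, A; split=> //; right.
have XAB : X != x2 /\ X != y2 /\ X != u2 /\ X != v2.
  by case: XY => [[-> _]|[-> _]]; do !split;
    [exact: (ne (i:=0) (j:=4))|exact: (ne (i:=0) (j:=5))|exact: (ne (i:=0) (j:=6))|exact: (ne (i:=0) (j:=7))
    |exact: (ne (i:=1) (j:=4))|exact: (ne (i:=1) (j:=5))|exact: (ne (i:=1) (j:=6))|exact: (ne (i:=1) (j:=7))].
have XH : X \in H /\ Y \in H by case: XY => [[-> ->]|[-> ->]].
have [M [cM pM hMC hML]] : exists M, [/\ cyc e M, perm_eq M (Cy ++ L),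
    (forall a b, present Cy a b -> a <> pt Cy i -> b <> pt Cy i -> present M a b) &
    (forall a b, present L a b -> a <> pt L j0 -> b <> pt L j0 -> present M a b)].
  apply: (@merge_cyc e esym Cy L i j0) => //; first exact: cyc_lay.
    by rewrite size_lay.
  rewrite hX hY !ptL hC hD.
  case: XY cross => [[-> ->]|[-> ->]] [[c1 c2]|[c1 c2]].
  - by left; split; [exact: (adj _ _ mA0 mD0 (pm2e_sym c1)).1|exact: (adj _ _ mB0 mC0 (pm2e_sym c2)).2].
  - by right; split; [exact: (adj _ _ mA0 mC0 (pm2e_sym c1)).1|exact: (adj _ _ mB0 mD0 (pm2e_sym c2)).2].
  - by right; split; [exact: (adj _ _ mB0 mC0 (pm2e_sym c2)).1|exact: (adj _ _ mA0 mD0 (pm2e_sym c1)).2].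
  - by left; split; [exact: (adj _ _ mB0 mD0 (pm2e_sym c2)).1|exact: (adj _ _ mA0 mC0 (pm2e_sym c1)).2].
exists M; split=> //.
- rewrite (perm_uniq pM) cat_uniq uC /= map_inj_uniq ?uH ?andbT; last first.
    by move=> a b; apply: rcons_injl.
  apply/hasPn => z /mapP [a ha ->]; apply/negP => /mC [b [s [_ hs /rcons_inj [_ E]]]].
  by move: E hs => [<-]; rewrite ltnn andbF.
- by rewrite (perm_size pM) size_cat sC size_lay mulSn addnC.
- move=> z; rewrite (perm_mem pM) mem_cat; split.
    case/orP=> [/mC [a [s [ha hs ->]]]|/mapP [a ha ->]].
      by exists a, s; split=> //; apply: ar1.
    by exists a, t.+1; split=> //; rewrite leqnn.
  case=> a [s [ha hs ->]]; apply/orP.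
  case: (ltnP s t.+1) => hs'.
    by left; apply/mC; exists a, s; split=> //; apply: ar2.
  right; rewrite (ar3 hs hs').
  exact: map_f.
have nXC : forall a s, a != X -> rcons a s <> pt Cy i by move=> a s h; rewrite hX; apply: rcons_neq.
have nL : forall a s, a != Cc -> rcons a s <> pt L j0 by move=> a s h; rewrite ptL hC; apply: rcons_neq.
case: XAB => n1 [n2 [n3 n4]].
split.
- apply: hML; [left; apply: cedge_lay => //|apply: nL|apply: nL].
  + exact: (ne (i:=0) (j:=2)).
  + exact: (ne (i:=1) (j:=2)).
- apply: hMC => //; apply: nXC => //; rewrite eq_sym //.
- apply: hMC => //; apply: nXC => //; rewrite eq_sym //.
- move=> _; case: (ltnP 1 t) => ht.
  + have [q1 q2] := p2 ht.
    split; apply: hMC => //; apply: nXC => //; rewrite eq_sym //.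
  + have t1 : t = 1%N by apply: ar4.
    have E2 : Posz 2 = Posz t.+1 by rewrite t1.
    rewrite E2; split; apply: hML; try (apply: nL).
    * left; exact: cedge_lay.
    * exact: (ne (i:=4) (j:=2)).
    * exact: (ne (i:=5) (j:=2)).
    * left; exact: cedge_lay.
    * exact: (ne (i:=6) (j:=2)).
    * exact: (ne (i:=7) (j:=2)).
Qed.

Lemma build t : (0 < t)%N -> exists Cy, Inv t Cy.
Proof.
elim: t => [//|t IH] _.
case: (posnP t) => [->|t0]; first by exists (lay H 1); apply: inv_base.
have [Cy hC] := IH t0.
exact: (inv_step t0 hC).
Qed.
End Build.

Lemma perm2 (T : eqType) (a b : T) : perm_eq [:: a; b] [:: b; a].
Proof. by apply/permP => q /=; rewrite !addn0 addnC. Qed.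

Lemma perm22 (T : eqType) (a b c e a' b' c' e' : T) :
  perm_eq [:: a; b] [:: a'; b'] -> perm_eq [:: c; e] [:: c'; e'] ->
  perm_eq [:: a; b; c; e] [:: a'; b'; c'; e'].
Proof. move=> h1 h2; exact: (perm_cat h1 h2). Qed.

Lemma final_site d (p : seq (seq int)) X Y U V :
  size X = d -> size Y = d -> size U = d -> size V = d ->
  sitepts d X Y U V -> present p X Y -> present p U V ->
  exists n m, site d p n m /\ perm_eq [:: pt p n; pt p n.+1; pt p m; pt p m.+1] [:: X; Y; U; V].
Proof.
move=> sX sY sU sV S [[n [h1 h2]]|[n [h1 h2]]] [[m [h3 h4]]|[m [h3 h4]]];
  exists n, m; rewrite siteE h1 h2 h3 h4; split.
- exact: S.
- by [].
- exact: site_swap2.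
- by apply: perm22 => //; apply: perm2.
- exact: site_swap1.
- by apply: perm22 => //; apply: perm2.
- by apply: site_swap1 => //; apply: site_swap2.
- by apply: perm22; apply: perm2.
Qed.

Lemma all2_rcons' (T1 T2 : Type) (r : T1 -> T2 -> bool) s t x y :
  all2 r (rcons s x) (rcons t y) = all2 r s t && r x y.
Proof.
elim: s t => [|a s IH] [|b t] /=.
- by rewrite andbT.
- by case: t => [|? ?] /=; rewrite andbF.
- by case: s {IH} => [|? ?] /=; rewrite andbF.
- by rewrite IH andbA.
Qed.

Lemma in_board_rcons n k z : in_board (rcons n k) z <->
  exists a (s : nat), [/\ in_board n a, (0 < s <= k)%N & z = rcons a (Posz s)].
Proof.
split.
- case/lastP: z => [|a s].
    by rewrite /in_board; case: n.
  rewrite /in_board all2_rcons' => /andP [ha /andP [h1 h2]].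
  case: s h1 h2 => // S h1 h2; exists a, S; split=> //.
  by rewrite -!(lez_nat) h1 h2.
- case=> a [s [ha hs ->]]; move: ha; rewrite /in_board all2_rcons' => -> /=.
  by rewrite !lez_nat.
Qed.

Lemma in_board_size n a : in_board n a -> size a = size n.
Proof. by rewrite /in_board all2E => /andP [/eqP ->]. Qed.

Theorem proposition3p7 (n : seq nat) (k : nat) :
  all (fun ni => 0 < ni)%N n -> (2 <= k)%N ->
  has_bisited_ham_cycle n -> has_bisited_ham_cycle (rcons n k).
Proof.
move=> _ hk [H [[h3 uH hmem hadj] [n1 [m1 [n2 [m2 [s1 s2 u8]]]]]]].
set d := size n.
have sH : (0 < size H)%N by apply: leq_trans h3.
have cycH : cyc (knight_adj d) H.
  by move=> j js; rewrite /pt (modn_small js); apply: hadj.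
have szH : forall a, a \in H -> size a = d.
  by move=> a /hmem /in_board_size.
have pH : forall j, pt H j \in H by move=> j; exact: ptH.
have ce : forall j, cedge H (pt H j) (pt H j.+1) by move=> j; exists j.
have cross := site_cross (szH _ (pH n1)) (szH _ (pH n1.+1)) (szH _ (pH m1)) (szH _ (pH m1.+1)) s1.
have k0 : (0 < k)%N by apply: leq_trans hk.
have [C [cC uC sC mC [_ pxy puv p2]]] :=
  build cycH sH uH szH (ce n1) (ce m1) (ce n2) (ce m2) cross u8 k0.
have [q1 q2] := p2 hk.
exists C; split.
- split=> //.
  + rewrite sC; apply: leq_trans h3 _; exact: leq_pmull.
  + move=> z; rewrite in_board_rcons mC; split.
      by case=> a [s [ha hs ->]]; exists a, s; split=> //; apply/hmem.
    by case=> a [s [ha hs ->]]; exists a, s; split=> //; apply/hmem.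
  + move=> j js; rewrite size_rcons.
    by have := cC j js; rewrite /pt (modn_small js).
- rewrite /bi_sited size_rcons.
  have S2 := s2; rewrite siteE in S2.
  have sz : forall j, size (pt H j) = d by move=> j; apply: szH.
  have L1 := site_lift (Posz 1) (sz _) (sz _) (sz _) (sz _) S2.
  have L2 := site_lift (Posz 2) (sz _) (sz _) (sz _) (sz _) S2.
  have sz1 : forall j (s : int), size (rcons (pt H j) s) = d.+1 by move=> j s; rewrite size_rcons sz.
  have [a1 [b1 [hs1 hp1]]] := final_site (p := C) (sz1 _ _) (sz1 _ _) (sz1 _ _) (sz1 _ _) L1 pxy puv.
  have [a2 [b2 [hs2 hp2]]] := final_site (p := C) (sz1 _ _) (sz1 _ _) (sz1 _ _) (sz1 _ _) L2 q1 q2.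
  exists a1, b1, a2, b2; split=> //.
  have := perm_cat hp1 hp2; rewrite -/(cat _ _) => /perm_uniq ->.
  set W := [:: pt H n2; pt H n2.+1; pt H m2; pt H m2.+1].
  have uW : uniq W.
    by move: u8; rewrite -/(cat [:: pt H n1; pt H n1.+1; pt H m1; pt H m1.+1] W) cat_uniq => /and3P [].
  have E : forall s : int, [:: rcons (pt H n2) s; rcons (pt H n2.+1) s; rcons (pt H m2) s; rcons (pt H m2.+1) s]
     = map (rcons^~ s) W by [].
  rewrite (E (Posz 1)) (E (Posz 2)).
  rewrite cat_uniq !map_inj_uniq; try by move=> ? ?; apply: rcons_injl.
  apply/and3P; split=> //.
  apply/hasPn => z hz; case/seq.mapP: hz => w _ ->; apply/negP => hz.
  by case/seq.mapP: hz => w' _ /rcons_inj [_].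
Qed.
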